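(* For any complex numbers $a,b,\alpha,\beta,\theta$ with $\beta a-\alpha b\neq0$, any natural number $n\ge1$, and any integer $k\ge0$ (with $k\le\lfloor n/2\rfloor$ in the first identity and $k\le\lfloor (n-1)/2\rfloor$ in the second), \[ \sum_{r=k}^{\lfloor n/2\rfloor}\binom{r}{k}\Psi\left(\begin{array}{cc|c} a & b & n \\ \alpha & \beta & r \end{array}\right)\theta^{r-k}=\Psi\left(\begin{array}{cc|c} a-\alpha\theta & b-\beta\theta & n \\ \alpha & \beta & k \end{array}\right), \] \[ \sum_{r=k}^{\lfloor (n-1)/2\rfloor}\binom{r}{k}\Phi\left(\begin{array}{cc|c} a & b & n \\ \alpha & \beta & r \end{array}\right)\theta^{r-k}=\Phi\left(\begin{array}{cc|c} a-\alpha\theta & b-\beta\theta & n \\ \alpha & \beta & k \end{array}\right). \]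
   Context: $\delta(m)=1$ for $m$ odd, $0$ for $m$ even; $\lfloor\cdot\rfloor$ is the floor. For indeterminates $a,b,\alpha,\beta$ and $n\ge1$, $\Psi\left(\begin{array}{cc|c} a & b & n \\ \alpha & \beta & r \end{array}\right)$ ($0\le r\le\lfloor n/2\rfloor$) and $\Phi\left(\begin{array}{cc|c} a & b & n \\ \alpha & \beta & r \end{array}\right)$ ($0\le r\le\lfloor (n-1)/2\rfloor$) are the unique polynomials in $\mathbb{Z}[a,b,\alpha,\beta]$ such that, identically in $x,y$, $(\beta a-\alpha b)^{\lfloor n/2\rfloor}\frac{x^n+y^n}{(x+y)^{\delta(n)}}=\sum_{r}\Psi\left(\begin{array}{cc|c} a & b & n \\ \alpha & \beta & r \end{array}\right)(\alpha x^2+\beta xy+\alpha y^2)^{\lfloor n/2\rfloor-r}(ax^2+bxy+ay^2)^r$ and $(\beta a-\alpha b)^{\lfloor (n-1)/2\rfloor}\frac{x^n-y^n}{(x-y)(x+y)^{\delta(n-1)}}=\sum_{r}\Phi\left(\begin{array}{cc|c} a & b & n \\ \alpha & \beta & r \end{array}\right)(\alpha x^2+\beta xy+\alpha y^2)^{\lfloor (n-1)/2\rfloor-r}(ax^2+bxy+ay^2)^r$; for numerical arguments these polynomials are evaluated. *)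

(* Defs.v *)
From HB Require Import structures.
From mathcomp Require Import all_boot all_order all_algebra.
From mathcomp Require Import mpoly.
From mathcomp Require Import complex.
From mathcomp Require Import Rstruct.
From Stdlib Require Import ClassicalEpsilon.
Set Implicit Arguments. Unset Strict Implicit. Unset Printing Implicit Defensive.
Import GRing.Theory.
Local Open Scope ring_scope.

Definition C : Type := complex Rdefinitions.R.
HB.instance Definition _ := GRing.Field.on C.

Definition P4 := {mpoly int[4]}.
Definition P6 := {mpoly P4[2]}.

Definition va : P4 := 'X_(inord 0).
Definition vb : P4 := 'X_(inord 1).
Definition valpha : P4 := 'X_(inord 2).
Definition vbeta : P4 := 'X_(inord 3).

Definition cst (p : P4) : P6 := p%:MP.
Definition vx : P6 := 'X_(inord 0).
Definition vy : P6 := 'X_(inord 1).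

Definition Qalpha : P6 := cst valpha * vx ^+ 2 + cst vbeta * (vx * vy) + cst valpha * vy ^+ 2.
Definition Qa : P6 := cst va * vx ^+ 2 + cst vb * (vx * vy) + cst va * vy ^+ 2.
Definition vdet : P4 := vbeta * va - valpha * vb.

(* delta(m) = odd m (as 0/1), floor(n/2) = n./2 *)
(* c is an expansion of (beta a - alpha b)^{floor(n/2)} (x^n+y^n)/(x+y)^{delta(n)};
   the division is written by multiplying through by (x+y)^{delta(n)}
   (P6 is an integral domain). *)
Definition psi_expansion (n : nat) (c : nat -> P4) : Prop :=
  (forall r, (n./2 < r)%N -> c r = 0) /\
  cst (vdet ^+ n./2) * (vx ^+ n + vy ^+ n) =
  (vx + vy) ^+ (odd n) *
    \sum_(r < n./2.+1) cst (c r) * Qalpha ^+ (n./2 - r) * Qa ^+ r.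

Definition phi_expansion (n : nat) (c : nat -> P4) : Prop :=
  (forall r, ((n.-1)./2 < r)%N -> c r = 0) /\
  cst (vdet ^+ (n.-1)./2) * (vx ^+ n - vy ^+ n) =
  (vx - vy) * (vx + vy) ^+ (odd n.-1) *
    \sum_(r < (n.-1)./2.+1) cst (c r) * Qalpha ^+ ((n.-1)./2 - r) * Qa ^+ r.

Definition Psi_poly (n : nat) : nat -> P4 :=
  epsilon (inhabits (fun _ => 0)) (psi_expansion n).
Definition Phi_poly (n : nat) : nat -> P4 :=
  epsilon (inhabits (fun _ => 0)) (phi_expansion n).

Definition ev4 (a b al be : C) (p : P4) : C :=
  mmap (fun z : int => z%:~R) (fun i : 'I_4 => nth 0 [:: a; b; al; be] i) p.

Definition Psi (a b al be : C) (n r : nat) : C := ev4 a b al be (Psi_poly n r).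
Definition Phi (a b al be : C) (n r : nat) : C := ev4 a b al be (Phi_poly n r).

(* Main.v *)
Require Import Defs.
From HB Require Import structures.
From mathcomp Require Import all_boot all_order all_algebra.
From mathcomp Require Import complex.
From mathcomp Require Import mpoly Rstruct ring zify.
From Stdlib Require Import ClassicalEpsilon.
Import GRing.Theory Num.Theory.
Local Open Scope ring_scope.

Definition F (m : nat) (q : {poly P4}) : P6 :=
  \sum_(r < m.+1) cst q`_r * Qalpha ^+ (m - r) * Qa ^+ r.

Lemma cstM (p q : P4) : cst (p * q) = cst p * cst q.
Proof. by rewrite /cst rmorphM. Qed.
Lemma cstD (p q : P4) : cst (p + q) = cst p + cst q.
Proof. by rewrite /cst rmorphD. Qed.
Lemma cstB (p q : P4) : cst (p - q) = cst p - cst q.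
Proof. by rewrite /cst rmorphB. Qed.
Lemma cstN (p : P4) : cst (- p) = - cst p.
Proof. by rewrite /cst rmorphN. Qed.
Lemma cstX (p : P4) k : cst (p ^+ k) = cst p ^+ k.
Proof. by rewrite /cst rmorphXn. Qed.
Lemma cst0 : cst 0 = 0.
Proof. by rewrite /cst rmorph0. Qed.
Lemma cst1 : cst 1 = 1.
Proof. by rewrite /cst rmorph1. Qed.

Lemma F0 (q : {poly P4}) : F 0 q = cst q`_0.
Proof. by rewrite /F big_ord1 /= !expr0 !mulr1. Qed.

Lemma FB m (q1 q2 : {poly P4}) : F m (q1 - q2) = F m q1 - F m q2.
Proof.
rewrite /F -sumrB; apply: eq_bigr => i _.
by rewrite coefB cstB !mulrBl.
Qed.

Lemma Fmul m (q : {poly P4}) (u v : P4) : (size q <= m.+1)%N ->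
  F m.+1 (q * (v *: 'X + u%:P)) = (cst u * Qalpha + cst v * Qa) * F m q.
Proof.
move=> hs.
have hc : forall r, (q * (v *: 'X + u%:P))`_r =
   v * (if r == 0%N then 0 else q`_r.-1) + q`_r * u.
  by move=> r; rewrite mulrDr coefD -scalerAr coefZ coefMX coefMC.
rewrite /F.
under eq_bigr => i _ do rewrite hc cstD mulrDl mulrDl.
rewrite big_split /= mulrDl addrC; congr (_ + _).
  rewrite big_ord_recr /= (nth_default 0 hs) mul0r (_ : cst 0 = 0) ?mul0r ?addr0; last exact: cst0.
  rewrite mulr_sumr; apply: eq_bigr => i _.
  rewrite cstM subSn; last by rewrite -ltnS.
  by rewrite exprS; ring.
rewrite big_ord_recl /= mulr0 (_ : cst 0 = 0) ?mul0r ?add0r ?mulr_sumr; last exact: cst0. apply: eq_bigr => i _.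
rewrite /bump /= add0n add1n cstM subSS exprS; ring.
Qed.

Definition s6 : P6 := vx ^+ 2 + vy ^+ 2.
Definition p6 : P6 := vx * vy.
Definition lin (u v : P4) : {poly P4} := v *: 'X + u%:P.

Lemma size_lin u v : (size (lin u v) <= 2)%N.
Proof.
apply: leq_trans (size_polyD _ _) _.
rewrite geq_max (leq_trans (size_scale_leq _ _)) ?size_polyX //.
exact: leq_trans (size_polyC_leq1 _) _.
Qed.

Lemma size_mul_lin m (q : {poly P4}) (u v : P4) : (size q <= m.+1)%N ->
  (size (q * lin u v)%R <= m.+2)%N.
Proof.
move=> h; apply: leq_trans (size_polyMleq _ _) _.
have := size_lin u v; lia.
Qed.

Lemma hs6 : cst vdet * s6 = cst (- vb) * Qalpha + cst vbeta * Qa.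
Proof.
rewrite /vdet /s6 /Qa /Qalpha cstN cstB !cstM.
move: (cst va) (cst vb) (cst valpha) (cst vbeta) vx vy => A B C D X Y.
ring.
Qed.

Lemma hp6 : cst vdet * p6 = cst va * Qalpha + cst (- valpha) * Qa.
Proof.
rewrite /vdet /p6 /Qa /Qalpha cstN cstB !cstM.
move: (cst va) (cst vb) (cst valpha) (cst vbeta) vx vy => A B C D X Y.
ring.
Qed.


Definition Pform (f g : nat -> P6) k := exists q : {poly P4},
  (size q <= (k./2).+1)%N /\ cst (vdet ^+ k./2) * f k = g k * F k./2 q.

Lemma Flin m (q : {poly P4}) (u v : P4) : (size q <= m.+1)%N ->
  F m.+1 (q * lin u v) = (cst u * Qalpha + cst v * Qa) * F m q.
Proof. exact: Fmul. Qed.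

Lemma rec_exist (f g : nat -> P6) :
  (forall k, f k.+4 = s6 * f k.+2 - p6 ^+ 2 * f k) ->
  (forall k, g k.+2 = g k) ->
  Pform f g 0 -> Pform f g 1 -> Pform f g 2 -> Pform f g 3 ->
  forall k, Pform f g k.
Proof.
move=> hf hg h0 h1 h2 h3.
suff H : forall k, [/\ Pform f g k, Pform f g k.+1, Pform f g k.+2 & Pform f g k.+3].
  by move=> k; case: (H k).
elim=> [|k [Hk Hk1 Hk2 Hk3]]; first by split.
split; [exact: Hk1|exact: Hk2|exact: Hk3|].
case: Hk => q0 [s0 e0]; case: Hk2 => q2 [s2 e2].
have E2 : (k.+2)./2 = (k./2).+1 by [].
have E4 : (k.+4)./2 = (k./2).+2 by [].
rewrite E2 in s2 e2.
exists (q2 * lin (- vb) vbeta - q0 * lin va (- valpha) * lin va (- valpha)).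
rewrite E4; split.
  apply: leq_trans (size_polyD _ _) _; rewrite size_polyN geq_max.
  apply/andP; split.
    apply: size_mul_lin; exact: s2.
  apply: size_mul_lin; apply: size_mul_lin; exact: s0.
have L1 := Flin _ _ (- vb) vbeta s2.
have L2 := Flin _ _ va (- valpha) s0.
have L3 := Flin _ _ va (- valpha) (size_mul_lin _ _ va (- valpha) s0).
rewrite FB.
rewrite [X in _ = _ * (X - _)]L1.
rewrite [X in _ = _ * (_ - X)]L3.
rewrite [X in _ = _ * (_ - _ * X)]L2 -hs6 -hp6.
rewrite cstX hg in e2; rewrite cstX in e0.
rewrite hf !hg cstX.
transitivity ((cst vdet * s6) * (cst vdet ^+ (k./2).+1 * f k.+2) -
   (cst vdet * p6) * ((cst vdet * p6) * (cst vdet ^+ k./2 * f k))).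
  move: (cst vdet) s6 p6 (f k) (f k.+2) => A B C D E.
  rewrite !exprS; move: (A ^+ k./2) => Z; ring.
rewrite e0 e2.
move: (g k) (cst vdet * s6) (cst vdet * p6) (F (k./2).+1 q2) (F k./2 q0) => A B C D E; ring.
Qed.

Lemma size1 : (size (1 : {poly P4})%R <= 1)%N.
Proof. by rewrite size_poly1. Qed.

Lemma F01 : F 0 1 = 1.
Proof. by rewrite F0 coef1 eqxx cst1. Qed.

Lemma Flin1 (u v : P4) : F 1 (1 * lin u v) = cst u * Qalpha + cst v * Qa.
Proof. by rewrite (@Flin 0 1 u v size1) F01 mulr1. Qed.

Lemma size1lin (u v : P4) : (size (1 * lin u v)%R <= 2)%N.
Proof. by rewrite mul1r size_lin. Qed.

Lemma odd2 k : odd k.+2 = odd k.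
Proof. by rewrite /= negbK. Qed.

Definition fpsi k : P6 := vx ^+ k + vy ^+ k.
Definition gpsi k : P6 := (vx + vy) ^+ odd k.
Definition fphi k : P6 := vx ^+ k.+1 - vy ^+ k.+1.
Definition gphi k : P6 := (vx - vy) * (vx + vy) ^+ odd k.

Lemma rec4 (X Y : P6) k : X ^+ k.+1.+4 - Y ^+ k.+1.+4 = 
  (X ^+ 2 + Y ^+ 2) * (X ^+ k.+3 - Y ^+ k.+3) - (X * Y) ^+ 2 * (X ^+ k.+1 - Y ^+ k.+1).
Proof.
rewrite !exprS; move: (X ^+ k) (Y ^+ k) => U V; ring.
Qed.

Lemma rec4p (X Y : P6) k : X ^+ k.+4 + Y ^+ k.+4 = 
  (X ^+ 2 + Y ^+ 2) * (X ^+ k.+2 + Y ^+ k.+2) - (X * Y) ^+ 2 * (X ^+ k + Y ^+ k).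
Proof.
rewrite !exprS; move: (X ^+ k) (Y ^+ k) => U V; ring.
Qed.

Lemma psi_form k : Pform fpsi gpsi k.
Proof.
apply: rec_exist.
- by move=> j; rewrite /fpsi rec4p.
- by move=> j; rewrite /gpsi odd2.
- exists 2%:P; split; first exact: leq_trans (size_polyC_leq1 _) _.
  rewrite F0 coefC eqxx /fpsi /gpsi !expr0 cst1 mul1r /cst rmorph_nat. by rewrite mul1r.
- exists 1; split; first exact: size1.
  by rewrite F01 /fpsi /gpsi !expr0 !expr1 cst1 mul1r mulr1.
- exists (1 * lin (- vb) vbeta); split; first exact: size1lin.
  by rewrite Flin1 /fpsi /gpsi -hs6 expr0 expr1 mul1r.
- exists (1 * lin (- (va + vb)) (valpha + vbeta)); split; first exact: size1lin.
  rewrite Flin1 /fpsi /gpsi expr1.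
  have -> : cst (- (va + vb)) * Qalpha + cst (valpha + vbeta) * Qa =
     cst vdet * s6 - cst vdet * p6.
    rewrite hs6 hp6 !cstN !cstD.
    move: (cst va) (cst vb) (cst valpha) (cst vbeta) Qa Qalpha => A B C D X Y; ring.
  rewrite /s6 /p6; move: (cst vdet) vx vy => A X Y; ring.
Qed.

Lemma phi_form k : Pform fphi gphi k.
Proof.
apply: rec_exist.
- by move=> j; rewrite /fphi rec4.
- by move=> j; rewrite /gphi odd2.
- exists 1; split; first exact: size1.
  by rewrite F01 /fphi /gphi !expr0 !expr1 cst1 !mul1r !mulr1.
- exists 1; split; first exact: size1.
  rewrite F01 /fphi /gphi !expr0 !expr1 cst1 mul1r mulr1.
  move: vx vy => X Y; ring.
- exists (1 * lin (va - vb) (vbeta - valpha)); split; first exact: size1lin.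
  rewrite Flin1 /fphi /gphi expr0 mulr1 expr1.
  have -> : cst (va - vb) * Qalpha + cst (vbeta - valpha) * Qa =
     cst vdet * s6 + cst vdet * p6.
    rewrite hs6 hp6 !cstN !cstB.
    move: (cst va) (cst vb) (cst valpha) (cst vbeta) Qa Qalpha => A B C D X Y; ring.
  rewrite /s6 /p6; move: (cst vdet) vx vy => A X Y; ring.
- exists (1 * lin (- vb) vbeta); split; first exact: size1lin.
  rewrite Flin1 /fphi /gphi -hs6 expr1.
  rewrite /s6; move: (cst vdet) vx vy => A X Y; ring.
Qed.

Lemma psi_exists n : exists c, psi_expansion n c.
Proof.
have [q [sq eq]] := psi_form n.
exists (fun r => q`_r); split.
  by move=> r hr; apply: nth_default; apply: leq_trans sq hr.
exact: eq.
Qed.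

Lemma phi_exists n : (1 <= n)%N -> exists c, phi_expansion n c.
Proof.
case: n => // k _.
have [q [sq eq]] := phi_form k.
exists (fun r => q`_r); split.
  by move=> r hr; apply: nth_default; apply: leq_trans sq hr.
exact: eq.
Qed.

Lemma Psi_spec n : psi_expansion n (Psi_poly n).
Proof. exact: (epsilon_spec _ _ (psi_exists n)). Qed.

Lemma Phi_spec n : (1 <= n)%N -> phi_expansion n (Phi_poly n).
Proof. move=> h; rewrite /Phi_poly; exact: (epsilon_spec _ _ (@phi_exists n h)). Qed.

Definition ev6 (a b al be x y : C) (p : P6) : C :=
  mmap (ev4 a b al be) (fun i : 'I_2 => nth 0 [:: x; y] i) p.

Lemma ev6M a b al be x y (p q : P6) : ev6 a b al be x y (p * q) = ev6 a b al be x y p * ev6 a b al be x y q.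
Proof. by rewrite /ev6 rmorphM. Qed.
Lemma ev6D a b al be x y (p q : P6) : ev6 a b al be x y (p + q) = ev6 a b al be x y p + ev6 a b al be x y q.
Proof. by rewrite /ev6 rmorphD. Qed.
Lemma ev6B a b al be x y (p q : P6) : ev6 a b al be x y (p - q) = ev6 a b al be x y p - ev6 a b al be x y q.
Proof. by rewrite /ev6 rmorphB. Qed.
Lemma ev6X a b al be x y (p : P6) k : ev6 a b al be x y (p ^+ k) = ev6 a b al be x y p ^+ k.
Proof. by rewrite /ev6 rmorphXn. Qed.
Lemma ev6S a b al be x y I (r : seq I) (P : pred I) (G : I -> P6) :
  ev6 a b al be x y (\sum_(i <- r | P i) G i) = \sum_(i <- r | P i) ev6 a b al be x y (G i).
Proof. by rewrite /ev6 rmorph_sum. Qed.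
Lemma ev6C a b al be x y (p : P4) : ev6 a b al be x y (cst p) = ev4 a b al be p.
Proof. exact: mmapC. Qed.
Lemma ev6x a b al be x y : ev6 a b al be x y vx = x.
Proof. by rewrite /ev6 /vx /mpolyX [LHS]mmapX mmap1U inordK. Qed.
Lemma ev6y a b al be x y : ev6 a b al be x y vy = y.
Proof. by rewrite /ev6 /vy /mpolyX [LHS]mmapX mmap1U inordK. Qed.

Lemma ev4a a b al be : ev4 a b al be va = a.
Proof. by rewrite /ev4 /va /mpolyX [LHS]mmapX mmap1U inordK. Qed.
Lemma ev4b a b al be : ev4 a b al be vb = b.
Proof. by rewrite /ev4 /vb /mpolyX [LHS]mmapX mmap1U inordK. Qed.
Lemma ev4al a b al be : ev4 a b al be valpha = al.
Proof. by rewrite /ev4 /valpha /mpolyX [LHS]mmapX mmap1U inordK. Qed.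
Lemma ev4be a b al be : ev4 a b al be vbeta = be.
Proof. by rewrite /ev4 /vbeta /mpolyX [LHS]mmapX mmap1U inordK. Qed.
Lemma ev4M a b al be (p q : P4) : ev4 a b al be (p * q) = ev4 a b al be p * ev4 a b al be q.
Proof. exact: (rmorphM (ev4 a b al be : {rmorphism P4 -> C})). Qed.
Lemma ev4B a b al be (p q : P4) : ev4 a b al be (p - q) = ev4 a b al be p - ev4 a b al be q.
Proof. exact: (rmorphB (ev4 a b al be : {rmorphism P4 -> C})). Qed.
Lemma ev4X a b al be (p : P4) k : ev4 a b al be (p ^+ k) = ev4 a b al be p ^+ k.
Proof. exact: (rmorphXn (ev4 a b al be : {rmorphism P4 -> C})). Qed.
Lemma ev4det a b al be : ev4 a b al be vdet = be * a - al * b.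
Proof. by rewrite /vdet ev4B !ev4M ev4a ev4b ev4al ev4be. Qed.

Definition Ab (al be x y : C) := al * x ^+ 2 + be * (x * y) + al * y ^+ 2.

Lemma ev6quad a b al be x y (c d : P4) :
  ev6 a b al be x y (cst c * vx ^+ 2 + cst d * (vx * vy) + cst c * vy ^+ 2) =
  ev4 a b al be c * x ^+ 2 + ev4 a b al be d * (x * y) + ev4 a b al be c * y ^+ 2.
Proof.
rewrite 2!ev6D.
rewrite (ev6M _ _ _ _ _ _ (cst c) (vx ^+ 2)).
rewrite (ev6M _ _ _ _ _ _ (cst d) (vx * vy)).
rewrite (ev6M _ _ _ _ _ _ (cst c) (vy ^+ 2)) (ev6M _ _ _ _ _ _ vx vy).
by rewrite !ev6X !ev6C ev6x ev6y.
Qed.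

Lemma ev6Qalpha a b al be x y : ev6 a b al be x y Qalpha = Ab al be x y.
Proof. by rewrite /Qalpha ev6quad ev4al ev4be. Qed.
Lemma ev6Qa a b al be x y : ev6 a b al be x y Qa = Ab a b x y.
Proof. by rewrite /Qa ev6quad ev4a ev4b. Qed.

Lemma psi_num a b al be x y n :
  (be * a - al * b) ^+ n./2 * (x ^+ n + y ^+ n) =
  (x + y) ^+ odd n * \sum_(r < n./2.+1) Psi a b al be n r *
      Ab al be x y ^+ (n./2 - r) * Ab a b x y ^+ r.
Proof.
have [_ E] := Psi_spec n.
have := congr1 (ev6 a b al be x y) E.
rewrite !ev6M ev6D ev6C ev4X ev4det !ev6X ev6D ev6x ev6y ev6S => ->.
congr (_ * _); apply: eq_bigr => r _.
by rewrite !ev6M !ev6X ev6C ev6Qalpha ev6Qa.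
Qed.

Lemma phi_num a b al be x y n : (1 <= n)%N ->
  (be * a - al * b) ^+ (n.-1)./2 * (x ^+ n - y ^+ n) =
  (x - y) * (x + y) ^+ odd n.-1 * \sum_(r < (n.-1)./2.+1) Phi a b al be n r *
      Ab al be x y ^+ ((n.-1)./2 - r) * Ab a b x y ^+ r.
Proof.
move=> hn; have [_ E] := Phi_spec n hn.
have := congr1 (ev6 a b al be x y) E.
rewrite !ev6M !ev6B ev6C ev4X ev4det !ev6X ev6D ev6x ev6y ev6S => ->.
congr (_ * _); apply: eq_bigr => r _.
by rewrite !ev6M !ev6X ev6C ev6Qalpha ev6Qa.
Qed.

Lemma binom_shift (R : comRingType) (A B t : R) m (P : nat -> R) :
  \sum_(r < m.+1) P r * A ^+ (m - r) * (B + t * A) ^+ r =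
  \sum_(k < m.+1) (\sum_(k <= r < m.+1) ('C(r, k))%:R * P r * t ^+ (r - k))
      * A ^+ (m - k) * B ^+ k.
Proof.
pose G (r k : nat) : R := if (k <= r)%N then
   ('C(r, k))%:R * P r * t ^+ (r - k) * A ^+ (m - k) * B ^+ k else 0.
transitivity (\sum_(r < m.+1) \sum_(k < m.+1) G r k).
  apply: eq_bigr => r _.
  rewrite addrC exprDn mulr_sumr (@big_ord_widen R 0 +%R r.+1 m.+1 (fun i : nat => P r * A ^+ (m - r) *
     ((t * A) ^+ (r - i) * B ^+ i *+ 'C(r, i)))) ?ltn_ord //.
  rewrite big_mkcond /=; apply: eq_bigr => k _.
  rewrite /G ltnS; case: leqP => hk //.
  have hr : (r <= m)%N by rewrite -ltnS ltn_ord.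
  have -> : (m - k = (m - r) + (r - k))%N by lia.
  rewrite exprD exprMn -mulr_natl; ring.
rewrite exchange_big /=; apply: eq_bigr => k _.
rewrite big_geq_mkord /= mulr_suml mulr_suml [RHS]big_mkcond /=.
apply: eq_bigr => r _; rewrite /G.
by case: leqP => _ //; rewrite !mul0r.
Qed.

Lemma poly_all_roots (p : {poly C}) : (forall z, p.[z] = 0) -> p = 0.
Proof.
move=> h; apply/eqP; apply/negPn/negP => hp.
pose rs := [seq (i%:R : C) | i <- iota 0 (size p)].
have hr : all (root p) rs by apply/allP => z /mapP [i _ ->]; apply/rootP.
have hu : uniq rs.
  rewrite map_inj_uniq ?iota_uniq // => i j /eqP.
  by rewrite eqr_nat => /eqP.
have := max_poly_roots hp hr hu.
by rewrite size_map size_iota ltnn.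
Qed.

Lemma two_neq0 : (2%:R : C) != 0.
Proof. by rewrite pnatr_eq0. Qed.

Lemma sqrtcK (z : C) : sqrtc z ^+ 2 = z.
Proof. exact: sqr_sqrtc. Qed.

Lemma form_uniq (a b al be : C) m (d : nat -> C) : be * a - al * b != 0 ->
  (forall x y, x + y != 0 -> x - y != 0 ->
     \sum_(r < m.+1) d r * Ab al be x y ^+ (m - r) * Ab a b x y ^+ r = 0) ->
  forall k, (k <= m)%N -> d k = 0.
Proof.
set D := be * a - al * b => hD H k hk.
pose q := \poly_(i < m.+1) d i.
suff q0 : q = 0.
  by have := congr1 (fun p : {poly C} => p`_k) q0; rewrite coef_poly ltnS hk coef0.
pose L1 : {poly C} := (be - 2%:R * al) *: 'X + (2%:R * a - b)%:P.
pose L2 : {poly C} := (be + 2%:R * al) *: 'X - (b + 2%:R * a)%:P.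
have h2 := two_neq0.
have hroots : forall mu, (L1 * L2 * q).[mu] = 0.
  move=> mu; rewrite !hornerM.
  pose s := (be * mu - b) / D; pose p := (a - al * mu) / D.
  pose u := sqrtc (s + 2%:R * p); pose v := sqrtc (s - 2%:R * p).
  have hu : u ^+ 2 = s + 2%:R * p := sqrtcK _.
  have hv : v ^+ 2 = s - 2%:R * p := sqrtcK _.
  have hL1 : L1.[mu] = D * u ^+ 2.
    rewrite hu /L1 hornerD hornerZ hornerX hornerC /s /p; field; exact: hD.
  have hL2 : L2.[mu] = D * v ^+ 2.
    rewrite hv /L2 hornerD hornerN hornerZ hornerX hornerC /s /p; field; exact: hD.
  have [u0|un0] := eqVneq u 0.
    by rewrite hL1 u0; ring.
  have [v0|vn0] := eqVneq v 0.
    by rewrite hL2 v0; ring.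
  pose x := (u + v) / 2%:R; pose y := (u - v) / 2%:R.
  have hxy1 : x + y = u by rewrite /x /y; field.
  have hxy2 : x - y = v by rewrite /x /y; field.
  have hs : x ^+ 2 + y ^+ 2 = s.
    have -> : x ^+ 2 + y ^+ 2 = (u ^+ 2 + v ^+ 2) / 2%:R by rewrite /x /y; field.
    by rewrite hu hv; field.
  have hp : x * y = p.
    have -> : x * y = (u ^+ 2 - v ^+ 2) / 4%:R.
      by rewrite /x /y; field.
    by rewrite hu hv; field.
  have hA' : al * s + be * p = 1 :> C by rewrite /s /p /D; field; exact: hD.
  have hB' : a * s + b * p = mu :> C by rewrite /s /p /D; field; exact: hD.
  have hA : Ab al be x y = 1 by rewrite -hA' -hs -hp /Ab; ring.
  have hB : Ab a b x y = mu by rewrite -hB' -hs -hp /Ab; ring.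
  have := H x y; rewrite hxy1 hxy2 hA hB => /(_ un0 vn0) e.
  suff -> : q.[mu] = 0 by rewrite mulr0.
  rewrite horner_poly; apply: etrans _ e; apply: eq_bigr => r _.
  by rewrite expr1n mulr1.
have P0 := poly_all_roots _ hroots.
have L1n : L1 != 0.
  apply/negP => /eqP L0.
  have c0 := congr1 (fun p : {poly C} => p`_0) L0.
  have c1 := congr1 (fun p : {poly C} => p`_1) L0.
  rewrite /= /L1 coef0 !coefD !coefZ !coefX !coefC /= in c0 c1.
  move/eqP: hD; apply.
  rewrite mulr1 addr0 in c1; rewrite mulr0 add0r in c0.
  have -> : D = a * (be - 2%:R * al) + al * (2%:R * a - b) by rewrite /D; ring.
  by rewrite c1 c0 !mulr0 addr0.
have L2n : L2 != 0.
  apply/negP => /eqP L0.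
  have c0 := congr1 (fun p : {poly C} => p`_0) L0.
  have c1 := congr1 (fun p : {poly C} => p`_1) L0.
  rewrite /= /L2 coef0 !coefB !coefZ !coefX !coefC /= in c0 c1.
  move/eqP: hD; apply.
  rewrite mulr1 subr0 in c1; rewrite mulr0 sub0r in c0.
  have c0' : b + 2%:R * a = 0 by rewrite -[LHS]opprK c0 oppr0.
  have -> : D = a * (be + 2%:R * al) - al * (b + 2%:R * a) by rewrite /D; ring.
  by rewrite c1 c0' !mulr0 subr0.
move/eqP: P0; rewrite !mulf_eq0 (negbTE L1n) (negbTE L2n) /=.
by move/eqP.
Qed.

Lemma core (a b al be th : C) m (P P' : nat -> C) :
  be * a - al * b != 0 ->
  (forall x y, x + y != 0 -> x - y != 0 ->
    \sum_(r < m.+1) P r * Ab al be x y ^+ (m - r) * Ab a b x y ^+ r =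
    \sum_(r < m.+1) P' r * Ab al be x y ^+ (m - r) * Ab (a - al * th) (b - be * th) x y ^+ r) ->
  forall k, (k <= m)%N ->
    \sum_(k <= r < m.+1) ('C(r, k))%:R * P r * th ^+ (r - k) = P' k.
Proof.
move=> hD H k hk; apply/eqP; rewrite -subr_eq0; apply/eqP.
pose d j := \sum_(j <= r < m.+1) ('C(r, j))%:R * P r * th ^+ (r - j) - P' j.
have hD' : be * (a - al * th) - al * (b - be * th) != 0.
  by rewrite (_ : _ - _ = be * a - al * b) //; ring.
apply: (@form_uniq (a - al * th) (b - be * th) al be m d hD') => // x y h1 h2.
rewrite /d.
under eq_bigr => r _ do rewrite mulrBl mulrBl.
rewrite sumrB -H // -binom_shift.
apply/eqP; rewrite subr_eq0; apply/eqP; apply: eq_bigr => r _.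
congr (_ * _ ^+ _); rewrite /Ab; ring.
Qed.

Theorem theorem10p5 (a b al be th : C) (n k : nat) :
  be * a - al * b != 0 -> (1 <= n)%N ->
  ((k <= n./2)%N ->
     \sum_(k <= r < n./2.+1) ('C(r, k))%:R * Psi a b al be n r * th ^+ (r - k)
     = Psi (a - al * th) (b - be * th) al be n k) /\
  ((k <= (n.-1)./2)%N ->
     \sum_(k <= r < (n.-1)./2.+1) ('C(r, k))%:R * Phi a b al be n r * th ^+ (r - k)
     = Phi (a - al * th) (b - be * th) al be n k).
Proof.
move=> hD hn.
have hdet : be * (a - al * th) - al * (b - be * th) = be * a - al * b by ring.
split => hk.
- apply: (@core a b al be th _ _ _ hD _ k hk) => x y h1 h2.
  have E1 := psi_num a b al be x y n.
  have E2 := psi_num (a - al * th) (b - be * th) al be x y n.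
  rewrite hdet E1 in E2.
  have hg : (x + y) ^+ odd n != 0 := expf_neq0 _ h1.
  first [ exact: (mulfI hg E2) | (apply: (mulfI hg); exact: E2) | (apply/eqP; rewrite -(inj_eq (mulfI hg)); apply/eqP; exact: E2) ].
- apply: (@core a b al be th _ _ _ hD _ k hk) => x y h1 h2.
  have E1 := phi_num a b al be x y n hn.
  have E2 := phi_num (a - al * th) (b - be * th) al be x y n hn.
  rewrite hdet E1 in E2.
  have hg : (x - y) * (x + y) ^+ odd n.-1 != 0 by rewrite mulf_neq0 // expf_neq0.
  first [ exact: (mulfI hg E2) | (apply: (mulfI hg); exact: E2) | (apply/eqP; rewrite -(inj_eq (mulfI hg)); apply/eqP; exact: E2) ].
Qed.
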